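(* Let $(\mathbb E;B,Q;M)$ be a metric double vector bundle with core $Q^*$, and let $D\subseteq\mathbb E$ be a double vector subbundle with sides $B'\subseteq B$, $U\subseteq Q$ and core $K\subseteq Q^*$. Let $\Sigma\colon B\times_MQ\to\mathbb E$ be a linear splitting adapted to $D$ ($\Sigma(B'\times_MU)\subseteq D$) with associated symmetric form $\Lambda$. Then $D$ is maximal isotropic (i.e. $D_b$ is maximal isotropic in the fibre $\mathbb E_b$ of $\mathbb E\to B$ for all $b\in B'$) if and only if $U=K^\circ$ and $\Lambda(u_1,u_2)\in(B')^\circ$ for all $m\in M$ and $u_1,u_2\in U_m$.
   Context: A double vector bundle $(\mathbb E;B,Q;M)$ with core $Q^*$: $\mathbb E$ carries commuting vector bundle structures over $B$ and over $Q$; the core is the intersection of the kernels of the two projections. A linear splitting $\Sigma\colon B\times_MQ\to\mathbb E$ is a double vector bundle embedding inducing the identity on $B$ and $Q$; it yields $\mathbb E\cong B\times_MQ\times_MQ^*$ (additions $(b,q,\tau)+_B(b,q',\tau')=(b,q+q',\tau+\tau')$, $(b,q,\tau)+_Q(b',q,\tau')=(b+b',q,\tau+\tau')$), horizontal lifts $\sigma_Q(q)(b_m)=\Sigma(b_m,q(m))$ and core sections $\tau^\dagger(b_m)=(b_m,0,\tau(m))$. The double vector bundle is metric if $\mathbb E\to B$ has a symmetric fibrewise nondegenerate pairing with $\langle\tau_1^\dagger,\tau_2^\dagger\rangle=0$, $\langle\chi,\tau^\dagger\rangle=q_B^*\langle q,\tau\rangle$ for linear sections $\chi$ over $q$, and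 $\langle\chi_1,\chi_2\rangle$ fibrewise linear on $B$ for linear sections. $\Lambda\colon Q\times_MQ\to B^*$ (symmetric bilinear) is defined by $\langle\sigma_Q(q_1),\sigma_Q(q_2)\rangle=\ell_{\Lambda(q_1,q_2)}$, $\ell_\beta$ the linear function on $B$ of $\beta\in\Gamma(B^* )$; thus $\langle(b,q_1,\tau_1),(b,q_2,\tau_2)\rangle=\langle\Lambda(q_1,q_2),b\rangle+\langle q_1,\tau_2\rangle+\langle q_2,\tau_1\rangle$. An adapted double subbundle with sides $B',U$, core $K$ corresponds to $B'\times_MU\times_MK$. $K^\circ\subseteq Q$, $(B')^\circ\subseteq B^*$ are annihilators. *)

(* Defs.v *)
From HB Require Import structures.
From mathcomp Require Import all_boot all_order all_algebra.
From mathcomp Require Import reals.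
Set Implicit Arguments. Unset Strict Implicit. Unset Printing Implicit Defensive.
Import Order.TTheory GRing.Theory Num.Theory.
Local Open Scope ring_scope.

(* Fibres of vector bundles are modelled in coordinates as row vectors;
   the dual of 'rV_n is again 'rV_n with the pairing below. *)
Definition dual_pair (R : ringType) n (u v : 'rV[R]_n) : R := (u *m v^T) 0 0.

Definition in_annih (R : fieldType) m n (A : 'M[R]_(m, n)) (q : 'rV[R]_n) : Prop :=
  forall t : 'rV[R]_n, (t <= A)%MS -> dual_pair q t = 0.

Definition is_subspace (R : ringType) (V : lmodType R) (S : V -> Prop) : Prop :=
  [/\ S 0, (forall x y, S x -> S y -> S (x + y)) & (forall (a : R) x, S x -> S (a *: x))].

Definition isotropic (R : ringType) (V : lmodType R) (beta : V -> V -> R) (S : V -> Prop) :=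
  forall x y, S x -> S y -> beta x y = 0.

Definition maximal_isotropic (R : ringType) (V : lmodType R) (beta : V -> V -> R)
    (S : V -> Prop) : Prop :=
  [/\ is_subspace S, isotropic beta S &
      forall S' : V -> Prop, is_subspace S' -> (forall x, S x -> S' x) ->
        isotropic beta S' -> forall x, S' x -> S x].

(* Fibre E_b of E -> B over b in B_m, identified via the splitting with
   Q_m x Q_m^* ; elements (b,q,tau) with b fixed are pairs (q,tau). *)
Definition fibre_pairing (R : ringType) nB nQ
    (Lam : 'rV[R]_nQ -> 'rV[R]_nQ -> 'rV[R]_nB) (b : 'rV[R]_nB)
    (x y : 'rV[R]_nQ * 'rV[R]_nQ) : R :=
  dual_pair (Lam x.1 y.1) b + dual_pair x.1 y.2 + dual_pair y.1 x.2.

(* Fibre D_b (b in B'_m) of the adapted double subbundle D = B' x_M U x_M K *)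
Definition sub_fibre (R : fieldType) nQ (U K : 'M[R]_nQ)
    (x : 'rV[R]_nQ * 'rV[R]_nQ) : Prop :=
  (x.1 <= U)%MS /\ (x.2 <= K)%MS.

(* Main.v *)
Require Import Defs.
From HB Require Import structures.
From mathcomp Require Import all_boot all_order all_algebra.
From mathcomp Require Import reals.
Import Order.TTheory GRing.Theory Num.Theory.
Set Implicit Arguments. Unset Strict Implicit.
Local Open Scope ring_scope.

Section H.
Variable (R : fieldType).

Lemma dp0l n (t : 'rV[R]_n) : dual_pair 0 t = 0.
Proof. by rewrite /dual_pair mul0mx mxE. Qed.
Lemma dp0r n (t : 'rV[R]_n) : dual_pair t 0 = 0.
Proof. by rewrite /dual_pair trmx0 mulmx0 mxE. Qed.
Lemma dpDl n (x y t : 'rV[R]_n) : dual_pair (x + y) t = dual_pair x t + dual_pair y t.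
Proof. by rewrite /dual_pair mulmxDl mxE. Qed.
Lemma dpZl n a (x t : 'rV[R]_n) : dual_pair (a *: x) t = a * dual_pair x t.
Proof. by rewrite /dual_pair -scalemxAl mxE. Qed.
Lemma dpC n (x y : 'rV[R]_n) : dual_pair x y = dual_pair y x.
Proof. by rewrite /dual_pair -[x *m _]trmxK trmx_mul trmxK mxE. Qed.

Lemma annihS n (K : 'M[R]_n) u : (u <= kermx K^T)%MS -> in_annih K u.
Proof.
move=> /submxP[x ->] t /submxP[y ->].
by rewrite /dual_pair trmx_mul -mulmxA (mulmxA (kermx _)) mulmx_ker mul0mx mulmx0 mxE.
Qed.

Lemma annih_ker n (K : 'M[R]_n) u : in_annih K u -> (u <= kermx K^T)%MS.
Proof.
move=> H; apply/sub_kermxP; apply/rowP => i.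
have := H (row i K) (row_sub _ _).
rewrite dpC /dual_pair -row_mul mxE => H1.
by rewrite -[u *m _]trmxK trmx_mul trmxK mxE H1 mxE.
Qed.

Lemma biannih n (K : 'M[R]_n) t :
  (forall u, in_annih K u -> dual_pair u t = 0) -> (t <= K)%MS.
Proof.
move=> H; set A := kermx K^T.
have tA : (t <= kermx A^T)%MS.
  apply/sub_kermxP; rewrite -[t *m _]trmxK trmx_mul trmxK.
  apply/matrixP => i j; rewrite ord1 !mxE.
  have := H (row j A) (annihS (row_sub _ _)).
  rewrite /dual_pair -row_mul mxE => h; rewrite -[X in _ = X]h; by rewrite [in RHS]mxE.
have KA : (K <= kermx A^T)%MS.
  by apply/sub_kermxP; rewrite -[K *m _]trmxK trmx_mul trmxK mulmx_ker trmx0.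
have : (kermx A^T <= K)%MS.
  rewrite -(mxrank_leqif_sup KA).2 mxrank_ker mxrank_tr /A mxrank_ker mxrank_tr.
  by rewrite subKn ?rank_leq_col.
by move=> h; exact: submx_trans tA h.
Qed.
End H.
Unset Implicit Arguments. Set Strict Implicit.

Theorem proposition5p2 (R : realType) (M : Type) (nB nQ : M -> nat)
    (B' : forall m, 'M[R]_(nB m)) (U K : forall m, 'M[R]_(nQ m))
    (Lam : forall m, 'rV[R]_(nQ m) -> 'rV[R]_(nQ m) -> 'rV[R]_(nB m))
    (Lam_linl : forall m (a : R) x y z, Lam m (a *: x + y) z = a *: Lam m x z + Lam m y z)
    (Lam_sym : forall m x y, Lam m x y = Lam m y x) :
  (forall m (b : 'rV[R]_(nB m)), (b <= B' m)%MS ->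
     maximal_isotropic (fibre_pairing (Lam m) b) (sub_fibre (U m) (K m)))
  <->
  (forall m,
     (forall q : 'rV[R]_(nQ m), (q <= U m)%MS <-> in_annih (K m) q) /\
     (forall u1 u2 : 'rV[R]_(nQ m), (u1 <= U m)%MS -> (u2 <= U m)%MS ->
        in_annih (B' m) (Lam m u1 u2))).
Proof.
have Lam0 : forall m z, Lam m 0 z = 0.
  move=> m z; have h := Lam_linl m 1 0 0 z.
  rewrite scaler0 add0r scale1r in h.
  by have := congr1 (fun v => v - Lam m 0 z) h; rewrite addrK subrr => ->.
have Lam0r : forall m z, Lam m z 0 = 0 by move=> m z; rewrite Lam_sym Lam0.
split.
- move=> H m; have [_ iso0 max0] := H m 0 (sub0mx _ _).
  have UK : forall q, (q <= U m)%MS -> in_annih (K m) q.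
    move=> q qU t tK.
    have := iso0 (q, 0) (0, t) (conj qU (sub0mx _ _)) (conj (sub0mx _ _) tK).
    by rewrite /fibre_pairing /= !dp0r add0r addr0.
  split.
  + move=> q; split; first exact: UK.
    move=> hq.
    have := max0 (fun x => in_annih (K m) x.1 /\ (x.2 <= K m)%MS) _ _ _ (q, 0).
    case => //.
    * split.
      -- by split => //=; [move=> t _; rewrite dp0l | exact: sub0mx].
      -- move=> [x1 x2] [y1 y2] [/= h1 h2] [/= h3 h4]; split => /=.
           by move=> t ht; rewrite dpDl h1 // h3 // addr0.
         by rewrite addmx_sub.
      -- move=> a [x1 x2] [/= h1 h2]; split => /=.
           by move=> t ht; rewrite dpZl h1 // mulr0.
         by rewrite scalemx_sub.
    * by move=> [x1 x2] [/= h1 h2]; split => //; apply: UK.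
    * move=> [x1 x2] [y1 y2] [/= h1 h2] [/= h3 h4].
      by rewrite /fibre_pairing /= dp0r h1 // h3 // !addr0.
    * by split => //=; exact: sub0mx.
  + move=> u1 u2 h1 h2 b hb; have [_ iso _] := H m b hb.
    have := iso (u1, 0) (u2, 0) (conj h1 (sub0mx _ _)) (conj h2 (sub0mx _ _)).
    by rewrite /fibre_pairing /= !dp0r !addr0.
- move=> H m b hb; have [HU HL] := H m; split.
  + split.
    * by split; exact: sub0mx.
    * by move=> [x1 x2] [y1 y2] [/= h1 h2] [/= h3 h4]; split; rewrite /= addmx_sub.
    * by move=> a [x1 x2] [/= h1 h2]; split; rewrite /= scalemx_sub.
  + move=> [x1 x2] [y1 y2] [/= hx1 hx2] [/= hy1 hy2].
    by rewrite /fibre_pairing /= (HL _ _ hx1 hy1 _ hb) ((HU _).1 hx1 _ hy2) ((HU _).1 hy1 _ hx2) !addr0.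
  + move=> S' [S0 SD SZ] sub iso [q t] hS.
    have hq : (q <= U m)%MS.
      apply/HU => k hk.
      have := iso (q, t) (0, k) hS (sub (0, k) (conj (sub0mx _ _) hk)).
      by rewrite /fibre_pairing /= Lam0r !dp0l add0r addr0.
    split => //=.
    have h0t : S' (0, t).
      have := SD _ _ hS (SZ (-1) _ (sub (q, 0) (conj hq (sub0mx _ _)))).
      suff -> : (q, t) + -1 *: (q, 0) = (0, t) by [].
      apply: injective_projections => /=; by rewrite ?scaleN1r ?oppr0 ?subrr ?addr0.
    apply: biannih => u hu.
    have uU := (HU u).2 hu.
    have := iso (0, t) (u, 0) h0t (sub (u, 0) (conj uU (sub0mx _ _))).
    by rewrite /fibre_pairing /= Lam0 !dp0l !add0r.
Qed.
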